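(* Let $k\neq0$ be an integer and $r=[2,2k,-2,-2]$. Then: (1) if $k<0$, every zero of $\Delta_{K(r)}(t)$ is real or of modulus $1$, and both real zeros and non-real zeros of modulus $1$ occur; (2) if $k\in\{1,2,3\}$, no zero of $\Delta_{K(r)}(t)$ is real or of modulus $1$; (3) if $k\ge4$, all zeros of $\Delta_{K(r)}(t)$ have modulus $1$.
   Context: For a finite sequence $r=[2a_1,2a_2,\dots,2a_n]$ of nonzero even integers, $K(r)$ denotes the 2-bridge knot or link whose associated rational number has the even continued fraction expansion $1/(2a_1-1/(2a_2-\cdots-1/(2a_n)))$. Let $M(r)$ be the $n\times n$ integer matrix whose $(k,k)$-entry is $a_k$, whose $(k,k+1)$-entry is $1$ ($1\le k\le n-1$), and whose other entries are $0$; $\Delta_{K(r)}(t)=\det(tM(r)-M(r)^T)$ is the (reduced) Alexander polynomial of $K(r)$ (up to sign). *)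

(* Defs.v *)
From HB Require Import structures.
From mathcomp Require Import all_boot all_order all_algebra all_field.
Set Implicit Arguments. Unset Strict Implicit. Unset Printing Implicit Defensive.
Import Order.TTheory GRing.Theory Num.Theory.
Local Open Scope ring_scope.

(* For r = [2a_1; ...; 2a_n] (a list of nonzero even integers), M(r) is the
   n x n integer matrix with (k,k)-entry a_k = r_k / 2, (k,k+1)-entry 1,
   and all other entries 0 (indices 0-based here). *)
Definition Mr (r : seq int) : 'M[int]_(size r) :=
  \matrix_(i < size r, j < size r)
    (if i == j :> nat then (r`_i %/ 2)%Z
     else if j == i.+1 :> nat then 1 else 0).

Definition alexander_poly (r : seq int) : {poly int} :=
  \det (\matrix_(i, j) ('X * ((Mr r) i j)%:P - ((Mr r) j i)%:P)).

Definition is_zero_of (p : {poly int}) (z : algC) : Prop :=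
  root (map_poly intr p) z.

(* Main.v *)
Require Import Defs.
From HB Require Import structures.
From mathcomp Require Import all_boot all_order all_algebra all_field.
From mathcomp Require Import ring lra zify.
Import Order.TTheory GRing.Theory Num.Theory.
Local Open Scope ring_scope.
Lemma alexE (k : int) : alexander_poly [:: 2; 2 * k; -2; -2] =
  k%:P * ('X - 1) ^+ 4 + k%:P * 'X * ('X - 1) ^+ 2 + 'X ^+ 2.
Proof.
rewrite /alexander_poly.
pose m (i j : nat) : int := if i == j then ([:: 2; 2 * k; -2; -2]`_i %/ 2)%Z
     else if j == i.+1 then 1 else 0.
have -> : \matrix_(i, j) ('X * ((Mr [:: 2; 2 * k; -2; -2]) i j)%:P - ((Mr [:: 2; 2 * k; -2; -2]) j i)%:P)
  = \matrix_(i < 4, j < 4) ('X * (m i j)%:P - (m j i)%:P).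
  by apply/matrixP => i j; rewrite !mxE.
do 3! (rewrite !(expand_det_row _ 0) !big_ord_recl !big_ord0 /cofactor).
rewrite !det_mx11 !mxE; cbv [bump]; rewrite /m /=.
have b0 : forall n, bump 0 n = n.+1 by [].
rewrite !b0 mulKz // (_ : (2 %/ 2)%Z = 1) // (_ : (-2 %/ 2)%Z = -1) //.
rewrite !add0n !rmorphN /= !polyC1 !polyC0.
ring.
Qed.
Lemma sq_real (x a : algC) : 0 <= a -> x ^+ 2 = a -> x \is Num.real.
Proof.
move=> ha hx; set s := sqrtC a.
have sR : s \is Num.real by apply: ger0_real; rewrite sqrtC_ge0.
have : (x - s) * (x + s) = 0 by rewrite -subr_sqr sqrtCK hx subrr.
move/eqP; rewrite mulf_eq0 => /orP [] /eqP h.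
- by rewrite -(subrK s x) h add0r.
- by rewrite -(addrK s x) h sub0r rpredN.
Qed.

Lemma halfE (x : algC) : x = (2 * x) / 2.
Proof. by rewrite mulrC mulKf // pnatr_eq0. Qed.

Lemma realB (c z : algC) : c \is Num.real -> 4 <= c ^+ 2 ->
  z ^+ 2 - c * z + 1 = 0 -> z \is Num.real.
Proof.
move=> cR hc hz.
have : (2 * z - c) ^+ 2 = c ^+ 2 - 4.
  have -> : (2 * z - c) ^+ 2 = 4 * (z ^+ 2 - c * z + 1) + c ^+ 2 - 4 by ring.
  by rewrite hz mulr0 add0r.
move/sq_real; rewrite subr_ge0 => /(_ hc) h.
rewrite [z]halfE; apply: rpredM; last by rewrite rpredV rpred_nat.
by rewrite -(subrK c (2 * z)) rpredD.
Qed.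

Lemma unitA (c z : algC) : c \is Num.real -> c ^+ 2 < 4 ->
  z ^+ 2 - c * z + 1 = 0 -> z \isn't Num.real /\ `|z| = 1.
Proof.
move=> cR hc hz.
have e : (2 * z - c) ^+ 2 = c ^+ 2 - 4.
  have -> : (2 * z - c) ^+ 2 = 4 * (z ^+ 2 - c * z + 1) + c ^+ 2 - 4 by ring.
  by rewrite hz mulr0 add0r.
have zNR : z \isn't Num.real.
  apply/negP => zR.
  have : 0 <= (2 * z - c) ^+ 2.
    by apply: real_exprn_even_ge0 => //; rewrite rpredB // rpredM // rpred_nat.
  by rewrite e subr_ge0 => /(lt_le_trans hc); rewrite ltxx.
split => //.
have hz' : z^* ^+ 2 - c * z^* + 1 = 0.
  have := congr1 (@Num.conj_op algC) hz.
  by rewrite !(rmorphD, rmorphN, rmorphM, rmorphXn, rmorph1, rmorph0) /= (conj_Creal cR) => <-; rewrite expr2.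
have : (z - z^*) * (z + z^* - c) = 0.
  have -> : (z - z^*) * (z + z^* - c) = (z ^+ 2 - c * z + 1) - (z^* ^+ 2 - c * z^* + 1) by ring.
  by rewrite hz hz' subrr.
move/eqP; rewrite mulf_eq0 => /orP [] /eqP h.
  by move: zNR; rewrite CrealE eq_sym -subr_eq0 h eqxx.
have hc' : c = z + z^* by apply/eqP; rewrite eq_sym -subr_eq0 h.
have n2 : `|z| ^+ 2 = 1.
  rewrite normCK.
  have -> : z * z^* = - (z ^+ 2 - (z + z^*) * z + 1) + 1 by ring.
  by rewrite -hc' hz oppr0 add0r.
have : (`|z| - 1) * (`|z| + 1) = 0 by rewrite -subr_sqr expr1n n2 subrr.
move/eqP; rewrite mulf_eq0 => /orP [] /eqP h2.
  by apply/eqP; rewrite -subr_eq0 h2.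
have : 0 < `|z| + 1 by rewrite ltr_pwDr.
by rewrite h2 ltxx.
Qed.
Lemma a1 (k c : algR) : 4 <= k -> k*c^+2 - 3*k*c + 2*k + 1 = 0 -> c^+2 < 4.
Proof. move=> hk hq. rewrite ltNge; apply/negP => h.
have h1 : 0 <= (c-1)*(c-2).
  case: (lerP 2 c) => hc; first nra.
  have : c <= -2 by nra.
  nra.
nra. Qed.

Lemma a2 (m s c : algR) : 1 <= m -> 0 <= s -> s^+2 = m^+2 + 4 * m -> 2 * m * c = 3 * m - s -> c^+2 < 4.
Proof. move=> hm hs hs2 hc.
have h1 : m < s by nra.
have h2 : s < 7 * m by nra.
nra. Qed.

Lemma a3 (m s c : algR) : 1 <= m -> 0 <= s -> s^+2 = m^+2 + 4 * m -> 2 * m * c = 3 * m + s -> 4 <= c^+2.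
Proof. move=> hm hs hs2 hc. have h1 : m < s by nra.
have : 2 <= c by nra.
nra. Qed.

Lemma a4 (x y : algR) : x < y -> algRval x < algRval y.
Proof. by []. Qed.

Definition Qc (k : int) (c : algC) : algC :=
  k%:~R * c ^+ 2 - 3 * k%:~R * c + 2 * k%:~R + 1.
Definition Pk (k : int) (z : algC) : algC :=
  k%:~R * (z - 1) ^+ 4 + k%:~R * z * (z - 1) ^+ 2 + z ^+ 2.

Lemma zeroE (k : int) (z : algC) :
  is_zero_of (alexander_poly [:: 2; 2 * k; -2; -2]) z <-> Pk k z = 0.
Proof.
rewrite /is_zero_of alexE /root /Pk.
rewrite !rmorphD !rmorphM !rmorphB /= !map_polyX !map_polyC /= !hornerE.
by split => [/eqP <- | h]; [ring | apply/eqP; rewrite -h; ring].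
Qed.

Lemma Pid (k : int) (z c : algC) : Pk k z = z ^+ 2 * Qc k c +
  (z ^+ 2 - c * z + 1) * (k%:~R * (2 * (c - 2) * z + (z ^+ 2 - c * z + 1)) + k%:~R * z).
Proof. rewrite /Pk /Qc; ring. Qed.

Lemma c_to_root (k : int) (z c : algC) :
  z ^+ 2 - c * z + 1 = 0 -> Qc k c = 0 -> Pk k z = 0.
Proof. by move=> h1 h2; rewrite (Pid k z c) h1 h2 !mulr0 mul0r addr0. Qed.

Lemma root_to_c (k : int) (z : algC) : k != 0 -> Pk k z = 0 ->
  z ^+ 2 - (z + z^-1) * z + 1 = 0 /\ Qc k (z + z^-1) = 0.
Proof.
move=> hk hP.
have z0 : z != 0.
  apply/negP => /eqP z0; move: hP; rewrite /Pk z0.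
  have -> : (k%:~R : algC) * (0 - 1) ^+ 4 + k%:~R * 0 * (0 - 1) ^+ 2 + 0 ^+ 2 = k%:~R by ring.
  by move/eqP; rewrite intr_eq0 (negbTE hk).
have hE : z ^+ 2 - (z + z^-1) * z + 1 = 0.
  rewrite mulrDl mulVf //; ring.
split => //.
move: hP; rewrite (Pid k z (z + z^-1)) hE mul0r addr0 => /eqP.
by rewrite mulf_eq0 expf_eq0 /= (negbTE z0) => /eqP.
Qed.

Lemma t3 (k : int) : (k%:~R : algC) ^+ 2 - 4 * k%:~R = (k ^+ 2 - 4 * k)%:~R.
Proof. by rewrite rmorphB rmorphXn rmorphM. Qed.

Lemma u_sq (k : int) (c : algC) : Qc k c = 0 ->
  (2 * k%:~R * c - 3 * k%:~R) ^+ 2 = (k ^+ 2 - 4 * k)%:~R.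
Proof.
move=> hq; rewrite -t3.
have -> : (2 * k%:~R * c - 3 * k%:~R) ^+ 2 = 4 * k%:~R * Qc k c + ((k%:~R : algC) ^+ 2 - 4 * k%:~R)
  by rewrite /Qc; ring.
by rewrite hq mulr0 add0r.
Qed.

Lemma c_real (k : int) (c : algC) : k != 0 -> 0 <= k ^+ 2 - 4 * k -> Qc k c = 0 ->
  c \is Num.real.
Proof.
move=> hk hd hq.
have ha : (0:algC) <= (k ^+ 2 - 4 * k)%:~R by rewrite ler0z.
have uR := sq_real _ _ ha (u_sq k c hq).
have kR : (k%:~R : algC) != 0 by rewrite intr_eq0.
have -> : c = (2 * k%:~R * c - 3 * k%:~R + 3 * k%:~R) / (2 * k%:~R).
  by field; exact: kR.
rewrite rpred_div. all: try done.
  by apply: rpredD => //; apply: rpredM; [apply: rpred_nat | apply: rpred_int].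
by apply: rpredM; [apply: rpred_nat | apply: rpred_int].
Qed.

Lemma c_nonreal (k : int) (c : algC) : k ^+ 2 - 4 * k < 0 -> Qc k c = 0 ->
  c \isn't Num.real.
Proof.
move=> hd hq; apply/negP => cR.
have : 0 <= (2 * k%:~R * c - 3 * k%:~R) ^+ 2.
  apply: real_exprn_even_ge0 => //.
  by rewrite rpredB // rpredM // ?rpredM // ?rpred_nat // rpred_int.
by rewrite (u_sq k c hq) ler0z leNgt hd.
Qed.

Lemma t1 (k : int) : k <= -1 -> (k%:~R : algR) <= -1.
Proof. move=> h. have : (k%:~R : algR) <= (-1)%:~R by rewrite ler_int. by rewrite rmorphN1. Qed.
Lemma t2 (k : int) : 4 <= k -> (4 : algR) <= k%:~R.
Proof. move=> h. have : ((4:int)%:~R : algR) <= k%:~R by rewrite ler_int. by []. Qed.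
Lemma t4 (k : int) : (k == 1) || (k == 2) || (k == 3) -> k ^+ 2 - 4 * k < 0.
Proof. move=> h. lia. Qed.
Lemma t5 (k : int) : k < 0 -> 0 <= k ^+ 2 - 4 * k.
Proof. move=> h. nia. Qed.
Lemma t6 (x : algR) : algRval (x ^+ 2) = (algRval x) ^+ 2.
Proof. by rewrite rmorphXn. Qed.
Lemma t7 (k : int) : algRval (k%:~R) = k%:~R.
Proof. by rewrite rmorph_int. Qed.

Lemma exists_z (c : algC) : exists z : algC, z ^+ 2 - c * z + 1 = 0.
Proof.
set s := sqrtC (c ^+ 2 - 4).
exists ((c + s) / 2).
have -> : ((c + s) / 2) ^+ 2 - c * ((c + s) / 2) + 1 = (s ^+ 2 - (c ^+ 2 - 4)) / 4.
  by field.
by rewrite /s sqrtCK subrr mul0r.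
Qed.

Lemma Qroot (F : numFieldType) (k s c : F) : k != 0 -> s ^+ 2 = k ^+ 2 - 4 * k ->
  c = (3 * k + s) / (2 * k) -> k * c ^+ 2 - 3 * k * c + 2 * k + 1 = 0.
Proof.
move=> hk hs ->.
have -> : k * ((3 * k + s) / (2 * k)) ^+ 2 - 3 * k * ((3 * k + s) / (2 * k)) + 2 * k + 1
  = (s ^+ 2 - (k ^+ 2 - 4 * k)) / (4 * k).
  by field; rewrite ?hk ?pnatr_eq0.
by rewrite hs subrr mul0r.
Qed.

Lemma QcR (k : int) (c : algR) :
  Qc k (algRval c) = algRval (k%:~R * c ^+ 2 - 3 * k%:~R * c + 2 * k%:~R + 1).
Proof. rewrite /Qc !(rmorphD, rmorphB, rmorphN, rmorphM, rmorphXn, rmorph_int, rmorph_nat, rmorph1). by []. Qed.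

Lemma exists_c (k : int) : k < 0 ->
  (exists c : algC, [/\ c \is Num.real, c ^+ 2 < 4 & Qc k c = 0]) /\
  (exists c : algC, [/\ c \is Num.real, 4 <= c ^+ 2 & Qc k c = 0]).
Proof.
move=> kneg.
have hk : k != 0 by rewrite ltr0_neq0.
have kR0 : (k%:~R : algR) != 0 by rewrite intr_eq0.
have km : (k%:~R : algR) <= -1 by apply: t1; lia.
set s := sqrtC ((k ^+ 2 - 4 * k)%:~R : algC).
have sR : s \is Num.real by apply: ger0_real; rewrite sqrtC_ge0 ler0z; nia.
set sr := in_algR sR.
have sr0 : 0 <= sr.
  have : (0 : algC) <= s by rewrite sqrtC_ge0 ler0z; nia.
  by [].
have sr2 : sr ^+ 2 = (k%:~R : algR) ^+ 2 - 4 * k%:~R.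
  apply: val_inj; rewrite /= rmorphXn /=.
  have := sqrtCK ((k ^+ 2 - 4 * k)%:~R : algC); rewrite -/s expr2 => ->.
  rewrite -t3; ring.
split.
- set cr := (3 * (k%:~R : algR) + sr) / (2 * k%:~R).
  exists (algRval cr); split; first exact: algRvalP.
  + have : cr ^+ 2 < 4.
      apply: (a2 (- k%:~R) sr); first by lra.
      * exact: sr0.
      * by rewrite sr2; ring.
      * by rewrite /cr; field.
    by move=> h; rewrite -rmorphXn (_ : (4 : algC) = algRval 4) ?rmorph_nat.
  + by rewrite QcR (Qroot _ _ sr _ kR0 sr2 (erefl _)) rmorph0.
- set cr := (3 * (k%:~R : algR) - sr) / (2 * k%:~R).
  exists (algRval cr); split; first exact: algRvalP.
  + have : 4 <= cr ^+ 2.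
      apply: (a3 (- k%:~R) sr); first by lra.
      * exact: sr0.
      * by rewrite sr2; ring.
      * by rewrite /cr; field.
    by move=> h; rewrite -rmorphXn (_ : (4 : algC) = algRval 4) ?rmorph_nat.
  + have sr2' : (- sr) ^+ 2 = (k%:~R : algR) ^+ 2 - 4 * k%:~R by rewrite sqrrN.
    by rewrite QcR (Qroot _ _ (- sr) _ kR0 sr2' (erefl _)) rmorph0.
Qed.

Lemma a1C (k : int) (c : algC) : 4 <= k -> c \is Num.real -> Qc k c = 0 -> c ^+ 2 < 4.
Proof.
move=> hk cR hq.
set cr := in_algR cR.
have : cr ^+ 2 < 4.
  apply: (a1 (k%:~R)); first exact: t2.
  have := QcR k cr; rewrite /= hq => h0; apply: val_inj; rewrite /= -h0 //.
by move=> h; rewrite (_ : c ^+ 2 = algRval (cr ^+ 2)) ?rmorphXn // (_ : (4 : algC) = algRval 4) ?rmorph_nat.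
Qed.

Theorem proposition12p2 (k : int) (hk : k != 0) :
  let D := alexander_poly [:: 2; 2 * k; -2; -2] in
  [/\ (k < 0 ->
         (forall z : algC, is_zero_of D z -> z \is Num.real \/ `|z| = 1)
         /\ (exists z : algC, is_zero_of D z /\ z \is Num.real)
         /\ (exists z : algC, is_zero_of D z /\ z \isn't Num.real /\ `|z| = 1)),
      ((k == 1) || (k == 2) || (k == 3) ->
         forall z : algC, is_zero_of D z -> z \isn't Num.real /\ `|z| != 1)
    & (4 <= k -> forall z : algC, is_zero_of D z -> `|z| = 1)].
Proof.
move=> D; split.
- move=> kneg; split; [|split].
  + move=> z /zeroE hz; have [hE hQ] := root_to_c k z hk hz.
    have cR : z + z^-1 \is Num.real by apply: (c_real k) => //; nia.
    case: (boolP ((z + z^-1) ^+ 2 < 4)) => h.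
      by right; case: (unitA _ _ cR h hE).
    left; apply: (realB _ _ cR _ hE).
    by rewrite real_leNgt ?rpredX ?rpred_nat.
  + have [_ [c [cR hc hq]]] := exists_c k kneg.
    have [z hz] := exists_z c.
    exists z; split; first by apply/zeroE; apply: (c_to_root k z c).
    exact: (realB _ _ cR hc hz).
  + have [[c [cR hc hq]] _] := exists_c k kneg.
    have [z hz] := exists_z c.
    exists z; split; first by apply/zeroE; apply: (c_to_root k z c).
    exact: (unitA _ _ cR hc hz).
- move=> h123 z /zeroE hz; have [hE hQ] := root_to_c k z hk hz.
  have cNR := c_nonreal k _ (t4 k h123) hQ.
  split.
    apply/negP => zR; move/negP: cNR; apply.
    by rewrite rpredD // rpredV.
  apply/negP => /eqP hz1; move/negP: cNR; apply.
  have e1 : z^-1 = z^* by rewrite invC_norm hz1 expr1n invr1 mul1r.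
  by rewrite CrealE rmorphD fmorphV /= -e1 invrK addrC.
- move=> k4 z /zeroE hz; have [hE hQ] := root_to_c k z hk hz.
  have cR : z + z^-1 \is Num.real by apply: (c_real k) => //; nia.
  by case: (unitA _ _ cR (a1C k _ k4 cR hQ) hE).
Qed.
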